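(* Let $(R,\mathfrak{m})$ be a Noetherian local ring and let $I$ be an ideal of $R$. Let $N>\mathrm{AR}(\mathfrak{m},I\subseteq R)$. If $J$ is an ideal of $R$ such that $I+\mathfrak{m}^N=J+\mathfrak{m}^N$, then $\mu(I)\le\mu(J)$.
   Context: $\mu(-)$ denotes the minimal number of generators. $\mathrm{AR}(\mathfrak{m},I\subseteq R)$ is the least integer $s$ with $\mathfrak{m}^n\cap I=\mathfrak{m}^{n-s}(\mathfrak{m}^s\cap I)$ for all $n\ge s$. *)

(* Defs.v *)
From mathcomp Require Import all_boot all_algebra.
From Stdlib Require Import ClassicalEpsilon.
Set Implicit Arguments. Unset Strict Implicit. Unset Printing Implicit Defensive.
Import GRing.Theory.
Local Open Scope ring_scope.

Section Ideals.
Variable R : comNzRingType.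

Definition subI (I J : R -> Prop) := forall x, I x -> J x.
Definition eqI (I J : R -> Prop) := forall x, I x <-> J x.

Definition is_ideal (I : R -> Prop) :=
  [/\ I 0, (forall x y, I x -> I y -> I (x + y)) & (forall r x, I x -> I (r * x))].

Definition ideal_gen (s : seq R) : R -> Prop :=
  fun x => exists c : 'I_(size s) -> R, x = \sum_(i < size s) c i * s`_i.

Definition idealD (I J : R -> Prop) : R -> Prop :=
  fun x => exists a b, [/\ I a, J b & x = a + b].
Definition idealI (I J : R -> Prop) : R -> Prop := fun x => I x /\ J x.
Definition idealM (I J : R -> Prop) : R -> Prop :=
  fun x => exists n (a b : 'I_n -> R),
    (forall i, I (a i) /\ J (b i)) /\ x = \sum_(i < n) a i * b i.
Definition idealX (I : R -> Prop) (n : nat) : R -> Prop :=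
  iter n (idealM I) (fun _ => True).

Definition ngen (I : R -> Prop) (n : nat) :=
  exists s : seq R, size s = n /\ eqI I (ideal_gen s).

Definition mu (I : R -> Prop) : nat :=
  epsilon (inhabits 0%N) (fun n => ngen I n /\ forall k, ngen I k -> (n <= k)%N).

Definition noetherian := forall I, is_ideal I -> exists n, ngen I n.

Definition maximal_ideal (M : R -> Prop) :=
  [/\ is_ideal M, ~ M 1 &
      forall J, is_ideal J -> subI M J -> eqI J M \/ J 1].

Definition local_ring (m : R -> Prop) :=
  maximal_ideal m /\ forall M, maximal_ideal M -> eqI M m.

Definition AR_prop (m I : R -> Prop) (s : nat) :=
  forall n, (s <= n)%N ->
    eqI (idealI (idealX m n) I) (idealM (idealX m (n - s)) (idealI (idealX m s) I)).

Definition is_AR (m I : R -> Prop) (s : nat) :=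
  AR_prop m I s /\ forall t, AR_prop m I t -> (s <= t)%N.

End Ideals.

(* Main.v *)
Require Import Defs.
From mathcomp Require Import all_boot all_algebra.
From mathcomp Require Import ring.
From Stdlib Require Import Classical ClassicalEpsilon.
Set Implicit Arguments. Unset Strict Implicit. Unset Printing Implicit Defensive.
Import GRing.Theory.
Local Open Scope ring_scope.

Lemma idN (R : comNzRingType) (I : R -> Prop) x : is_ideal I -> I x -> I (- x).
Proof. by case=> _ _ hm hx; rewrite -mulN1r; apply: hm. Qed.

Lemma idD (R : comNzRingType) (I : R -> Prop) x y : is_ideal I -> I x -> I y -> I (x + y).
Proof. by case=> _ hd _; apply: hd. Qed.

Lemma idB (R : comNzRingType) (I : R -> Prop) x y : is_ideal I -> I x -> I y -> I (x - y).
Proof. by move=> hI hx hy; apply: idD => //; apply: idN. Qed.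

Lemma idM (R : comNzRingType) (I : R -> Prop) r x : is_ideal I -> I x -> I (r * x).
Proof. by case=> _ _ hm; apply: hm. Qed.

Lemma idMr (R : comNzRingType) (I : R -> Prop) r x : is_ideal I -> I x -> I (x * r).
Proof. by move=> hI hx; rewrite mulrC; apply: idM. Qed.

Lemma id0 (R : comNzRingType) (I : R -> Prop) : is_ideal I -> I 0.
Proof. by case. Qed.

Lemma id_sum (R : comNzRingType) (I : R -> Prop) n (F : 'I_n -> R) :
  is_ideal I -> (forall i, I (F i)) -> I (\sum_(i < n) F i).
Proof.
move=> hI hF; apply: big_ind => //; first exact: id0.
by move=> x y; apply: idD.
Qed.

Lemma gen_ideal (R : comNzRingType) (s : seq R) : is_ideal (ideal_gen s).
Proof.
split.
- exists (fun _ => 0); rewrite big1 // => i _; exact: mul0r.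
- move=> x y [c ->] [d ->]; exists (fun i => c i + d i).
  by rewrite -big_split; apply: eq_bigr => i _; rewrite mulrDl.
- move=> r x [c ->]; exists (fun i => r * c i).
  by rewrite mulr_sumr; apply: eq_bigr => i _; rewrite mulrA.
Qed.

Lemma gen_mem (R : comNzRingType) (s : seq R) (i : 'I_(size s)) : ideal_gen s s`_i.
Proof.
exists (fun j => if j == i then 1 else 0).
rewrite (bigD1 i) //= eqxx mul1r big1 ?addr0 // => j /negbTE ->; exact: mul0r.
Qed.

Lemma idealM_ideal (R : comNzRingType) (I J : R -> Prop) :
  is_ideal I -> is_ideal (idealM I J).
Proof.
move=> hI; split.
- by exists 0%N, (fun _ => 0), (fun _ => 0); split => [[]//|]; rewrite big_ord0.
- move=> x y [n1 [a1 [b1 [h1 ->]]]] [n2 [a2 [b2 [h2 ->]]]].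
  exists (n1 + n2)%N, (fun i => match split i with inl j => a1 j | inr j => a2 j end),
    (fun i => match split i with inl j => b1 j | inr j => b2 j end); split.
  + by move=> i; case: (split i).
  + rewrite big_split_ord /=; congr (_ + _); apply: eq_bigr => i _.
    * by have := unsplitK (inl i : 'I_n1 + 'I_n2) => /= ->.
    * by have := unsplitK (inr i : 'I_n1 + 'I_n2) => /= ->.
- move=> r x [n [a [b [h ->]]]]; exists n, (fun i => r * a i), b; split.
  + by move=> i; have [? ?] := h i; split => //; apply: idM.
  + by rewrite mulr_sumr; apply: eq_bigr => i _; rewrite mulrA.
Qed.

Lemma idealX_ideal (R : comNzRingType) (m : R -> Prop) n :
  is_ideal m -> is_ideal (idealX m n).
Proof.
move=> hm; case: n => [|n] /=; last exact: idealM_ideal.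
by split.
Qed.

Lemma idealM_sub (R : comNzRingType) (I J : R -> Prop) x :
  is_ideal I -> idealM I J x -> I x.
Proof.
move=> hI [n [a [b [h ->]]]]; apply: id_sum => // i.
by apply: idMr; case: (h i).
Qed.

Lemma exists_max (R : comNzRingType) (P : R -> Prop) :
  noetherian R -> is_ideal P -> ~ P 1 -> exists M, maximal_ideal M /\ subI P M.
Proof.
move=> hN hP hP1; apply: NNPP => hno.
pose spec (Q J : R -> Prop) := [/\ is_ideal J, subI Q J, ~ eqI J Q & ~ J 1].
have hstep : forall Q, is_ideal Q -> subI P Q -> ~ Q 1 -> exists J, spec Q J.
  move=> Q hQ hPQ hQ1; apply: NNPP => hnJ; apply: hno; exists Q; split => //.
  split => // J hJ hQJ; apply: NNPP => hor; apply: hnJ; exists J; split => //.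
  - by move=> h; apply: hor; left.
  - by move=> h; apply: hor; right.
pose step Q := epsilon (inhabits Q) (spec Q).
pose Ch n := iter n step P.
have hinv : forall n, [/\ is_ideal (Ch n), subI P (Ch n), ~ Ch n 1 & spec (Ch n) (Ch n.+1)].
  elim=> [|n [h1 h2 h3 h4]].
    have hs := epsilon_spec (inhabits P) (spec P) (hstep P hP (fun x h => h) hP1).
    by split.
  case: h4 => h5 h6 h7 h8.
  have hsub : subI P (Ch n.+1) by move=> x /h2 /h6.
  have hs := epsilon_spec (inhabits (Ch n.+1)) (spec (Ch n.+1)) (hstep _ h5 hsub h8).
  by split.
have hmono : forall n k, subI (Ch n) (Ch (k + n)%N).
  move=> n; elim=> [|k IH] x hx //; have [_ _ _ [_ h _ _]] := hinv (k + n)%N.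
  exact/h/IH.
have hmono' : forall n n', (n <= n')%N -> subI (Ch n) (Ch n').
  by move=> n n' /subnK <-; apply: hmono.
pose U x := exists n, Ch n x.
have hU : is_ideal U.
  split.
  - by exists 0%N; have [[]] := hinv 0%N.
  - move=> x y [n hx] [n' hy]; exists (maxn n n'); apply: idD.
    + by have [] := hinv (maxn n n').
    + by apply: hmono' hx; apply: leq_maxl.
    + by apply: hmono' hy; apply: leq_maxr.
  - move=> r x [n hx]; exists n; apply: idM => //; by have [] := hinv n.
have [k [s [_ hs]]] := hN U hU.
have hK : forall t, (t <= size s)%N -> exists K, forall i, (i < t)%N -> Ch K s`_i.
  elim=> [|t IH] ht; first by exists 0%N.
  have [K hK] := IH (ltnW ht).
  have [n hn] : U s`_t by apply/hs; exact: (gen_mem (Ordinal ht)).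
  exists (maxn K n) => i; rewrite ltnS leq_eqVlt => /orP [/eqP ->|hi].
  - by apply: hmono' hn; apply: leq_maxr.
  - by apply: hmono' (hK _ hi); apply: leq_maxl.
have [K hKs] := hK _ (leqnn _).
have hUK : subI U (Ch K).
  move=> x /hs [c ->]; apply: id_sum; first by have [] := hinv K.
  by move=> i; apply: idM; [have [] := hinv K | apply: hKs].
have [_ _ _ [_ h1 h2 _]] := hinv K.
apply: h2 => x; split; last exact: h1.
by move=> hx; apply: hUK; exists K.+1.
Qed.

Lemma local_unit (R : comNzRingType) (m : R -> Prop) a :
  noetherian R -> local_ring m -> m a -> exists u, u * (1 - a) = 1.
Proof.
move=> hN [[hm hm1 _] huniq] ha; apply: NNPP => hno.
pose P x := exists r, x = r * (1 - a).
have hP : is_ideal P.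
  split.
  - by exists 0; rewrite mul0r.
  - by move=> x y [r ->] [r' ->]; exists (r + r'); rewrite mulrDl.
  - by move=> r x [r' ->]; exists (r * r'); rewrite mulrA.
have hP1 : ~ P 1 by move=> [r h]; apply: hno; exists r.
have [M [hM hPM]] := exists_max hN hP hP1.
have hmM := huniq M hM.
have h1a : m (1 - a) by apply/hmM/hPM; exists 1; rewrite mul1r.
apply: hm1; have -> : (1 : R) = (1 - a) + a by ring.
exact: idD.
Qed.

Lemma mu_spec (R : comNzRingType) (I : R -> Prop) :
  (exists n, ngen I n) -> ngen I (mu I) /\ forall k, ngen I k -> (mu I <= k)%N.
Proof.
move=> [n hn]; apply: (epsilon_spec (inhabits 0%N) (fun n => ngen I n /\ forall k, ngen I k -> (n <= k)%N)).
elim/ltn_ind: n hn => n IH hn.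
case: (classic (exists k, (k < n)%N /\ ngen I k)) => [[k [hk hk']]|hno].
- exact: IH hk hk'.
- exists n; split => // k hk; rewrite leqNgt; apply/negP => hlt; apply: hno.
  by exists k.
Qed.

Lemma gen_mem' (R : comNzRingType) (s : seq R) i : (i < size s)%N -> ideal_gen s s`_i.
Proof. by move=> hi; exact: (gen_mem (Ordinal hi)). Qed.

Lemma nakayama (R : comNzRingType) (m I Ip : R -> Prop) (h : seq R) :
  noetherian R -> local_ring m -> is_ideal m -> is_ideal I -> is_ideal Ip ->
  eqI I (ideal_gen h) -> (forall x, I x -> exists y, Ip y /\ idealM m I (x - y)) ->
  subI I Ip.
Proof.
move=> hN hloc hm hI hIp hIh HI.
pose Q t x := exists c : nat -> R, Ip (x - \sum_(i < t) c i * h`_i).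
have hr : forall x, I x -> Q (size h) x.
  move=> x /hIh [c ->].
  exists (fun n => if insub n is Some j then c j else 0).
  have -> : \sum_(i < size h) (if insub (nat_of_ord i) is Some j then c j else 0) * h`_i
          = \sum_(i < size h) c i * h`_i.
    by apply: eq_bigr => i _; rewrite (valK i).
  by rewrite subrr; apply: id0.
have hstep : forall t, (t < size h)%N -> (forall x, I x -> Q t.+1 x) ->
    forall x, I x -> Q t x.
  move=> t ht IHQ.
  have hmI : forall x, idealM m I x -> exists c : nat -> R, (forall i, m (c i)) /\
      Ip (x - \sum_(i < t.+1) c i * h`_i).
    move=> x [n [a [b [hab ->]]]]; elim: n a b hab => [|n IH] a b hab.
      exists (fun _ => 0); split; first by move=> i; apply: id0.
      rewrite big_ord0 big1 ?subr0; first exact: id0.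
      by move=> i _; rewrite mul0r.
    rewrite big_ord_recr /=.
    have [c1 [hc1 hc1']] := IH (fun i => a (widen_ord (leqnSn n) i))
       (fun i => b (widen_ord (leqnSn n) i)) (fun i => hab _).
    have [hamax hbmax] := hab ord_max.
    have [c2 hc2] := IHQ _ hbmax.
    exists (fun i => c1 i + a ord_max * c2 i); split.
      by move=> i /=; apply: idD; [exact: hm | exact: hc1 | apply: idMr].
    have -> : \sum_(i < t.+1) (c1 i + a ord_max * c2 i) * h`_i =
       \sum_(i < t.+1) c1 i * h`_i + a ord_max * \sum_(i < t.+1) c2 i * h`_i.
      by rewrite mulr_sumr -big_split; apply: eq_bigr => i _ /=; ring.
    set S1 := \sum_(i < t.+1) c1 i * h`_i.
    set S2 := \sum_(i < t.+1) c2 i * h`_i.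
    set X := \sum_(i < n) _.
    have -> : X + a ord_max * b ord_max - (S1 + a ord_max * S2) =
       (X - S1) + a ord_max * (b ord_max - S2) by ring.
    by apply: idD => //; apply: idM.
  have hht : I h`_t by apply/hIh; apply: gen_mem'.
  have [y [hy hz]] := HI _ hht.
  have [c [hc hc']] := hmI _ hz.
  have hc2 : Ip (h`_t - \sum_(i < t.+1) c i * h`_i).
    have -> : h`_t - \sum_(i < t.+1) c i * h`_i =
       y + (h`_t - y - \sum_(i < t.+1) c i * h`_i) by ring.
    exact: idD.
  rewrite big_ord_recr /= in hc2.
  have [u hu] := local_unit hN hloc (hc t).
  have hc3 : Ip (h`_t - \sum_(i < t) (u * c i) * h`_i).
    have -> : \sum_(i < t) (u * c i) * h`_i = u * \sum_(i < t) c i * h`_i.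
      by rewrite mulr_sumr; apply: eq_bigr => i _; rewrite mulrA.
    set S := \sum_(i < t) _.
    have -> : h`_t - u * S = u * (h`_t - (S + c t * h`_t)).
      have -> : u * (h`_t - (S + c t * h`_t)) = (u * (1 - c t)) * h`_t - u * S by ring.
      by rewrite hu mul1r.
    exact: idM.
  move=> x hx; have [d hd] := IHQ _ hx.
  rewrite big_ord_recr /= in hd.
  exists (fun i => d i + d t * (u * c i)).
  have -> : \sum_(i < t) (d i + d t * (u * c i)) * h`_i =
     \sum_(i < t) d i * h`_i + d t * \sum_(i < t) (u * c i) * h`_i.
    by rewrite mulr_sumr -big_split; apply: eq_bigr => i _ /=; ring.
  set S1 := \sum_(i < t) d i * h`_i.
  set S2 := \sum_(i < t) (u * c i) * h`_i.
  have -> : x - (S1 + d t * S2) = (x - (S1 + d t * h`_t)) + d t * (h`_t - S2) by ring.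
  by apply: idD => //; apply: idM.
have hdown : forall k, (k <= size h)%N -> forall x, I x -> Q (size h - k)%N x.
  elim=> [|k IH] hk; first by rewrite subn0.
  apply: hstep; first by rewrite subnS prednK ?leq_subr // subn_gt0.
  by rewrite -subSn // subSS; apply: IH; apply: ltnW.
move=> x hx; have [c hc] := hdown _ (leqnn _) x hx.
by move: hc; rewrite subnn big_ord0 subr0.
Qed.

Theorem proposition3p4 (R : comNzRingType) (m I J : R -> Prop) (ar N : nat) :
  noetherian R -> local_ring m -> is_ideal I -> is_ideal J ->
  is_AR m I ar -> (ar < N)%N ->
  eqI (idealD I (idealX m N)) (idealD J (idealX m N)) ->
  (mu I <= mu J)%N.
Proof.
move=> hN hloc hI hJ [hAR _] hlt heq.
have hm : is_ideal m by case: hloc => [[]].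
have hmX := idealX_ideal N hm.
have [[g [hgs hJg]] _] := mu_spec (hN J hJ).
pose phi x := epsilon (inhabits 0) (fun y => I y /\ idealX m N (x - y)).
have hphi : forall x, J x -> I (phi x) /\ idealX m N (x - phi x).
  move=> x hx; apply: (epsilon_spec (inhabits 0) (fun y => I y /\ idealX m N (x - y))).
  have : idealD J (idealX m N) x by exists x, 0; split => //; [exact: id0 | rewrite addr0].
  move/heq => [a [b [ha hb ->]]]; exists a; split => //.
  by rewrite addrC addKr.
pose f := map phi g.
pose Ip := ideal_gen f.
have hIp := gen_ideal f.
have hfi : forall i, (i < size g)%N -> f`_i = phi g`_i /\ Ip (phi g`_i).
  move=> i hi; have e : f`_i = phi g`_i by rewrite /f (nth_map 0).
  split => //; rewrite -e; apply: gen_mem'; by rewrite size_map.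
have hIpI : subI Ip I.
  move=> x [c ->]; apply: id_sum => // i; apply: idM => //.
  case: i => k hk /=; have hi : (k < size g)%N by move: hk; rewrite /f size_map.
  rewrite (hfi _ hi).1; apply: (hphi _ _).1; apply/hJg; exact: gen_mem'.
have HI : forall x, I x -> exists y, Ip y /\ idealM m I (x - y).
  move=> x hx.
  have : idealD I (idealX m N) x by exists x, 0; split => //; [exact: id0 | rewrite addr0].
  move/heq => [j [e [/hJg [c ej] he ex]]]; move: ej ex => -> ex; rewrite ex.
  pose y := \sum_(i < size g) c i * phi g`_i.
  have hy : Ip y by apply: id_sum => // i; apply: idM => //; exact: (hfi _ (ltn_ord i)).2.
  exists y; split => //.
  have hxy : idealX m N (\sum_(i < size g) c i * g`_i + e - y).
    have -> : \sum_(i < size g) c i * g`_i + e - y =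
       e + \sum_(i < size g) c i * (g`_i - phi g`_i).
      have -> : \sum_(i < size g) c i * (g`_i - phi g`_i) =
         \sum_(i < size g) c i * g`_i - y.
        by rewrite /y -sumrB; apply: eq_bigr => i _; ring.
      ring.
    apply: idD => //; apply: id_sum => // i; apply: idM => //.
    apply: (hphi _ _).2; apply/hJg; exact: gen_mem'.
  have hIxy : I (\sum_(i < size g) c i * g`_i + e - y).
    by apply: idB => //; [rewrite -ex | apply: hIpI].
  have := (hAR N (ltnW hlt) (\sum_(i < size g) c i * g`_i + e - y)).1 (conj hxy hIxy).
  move=> [n [a [b [hab ->]]]]; exists n, a, b; split => // i.
  have [ha [_ hb]] := hab i; split => //.
  move: ha; have -> : (N - ar)%N = (N - ar.+1).+1 by rewrite subnS prednK // subn_gt0.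
  by move=> /= ha; exact: idealM_sub ha.
have hII : eqI I Ip.
  move=> x; split; last exact: hIpI.
  have [[h [_ hh]] _] := mu_spec (hN I hI).
  move=> hx; have H := nakayama hN hloc hm hI hIp hh HI. exact: H.
have [_ hmin] := mu_spec (hN I hI).
rewrite -hgs -(size_map phi); apply: hmin; exists f; split => //.
Qed.
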